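(* For every $\alpha \in (0,\frac12)$ it holds that $T_\alpha(\alpha) = T_\alpha^2(1-\alpha)$.
   Context: For $\alpha \in (0,1)$ let $D_\alpha = \bigcup_{n \ge 1} \big[ \frac{1}{n+\alpha}, \frac1n \big]$, $D_\alpha^{\mathsf c} = [0,1]\setminus D_\alpha$, $I_\alpha = [\min\{\alpha,1-\alpha\},1]$, and $T_\alpha : I_\alpha \to I_\alpha$, $T_\alpha(x) = \frac1x - \lfloor \frac1x \rfloor$ if $x \in D_\alpha^{\mathsf c}$, $T_\alpha(x) = 1 + \lfloor \frac1x \rfloor - \frac1x$ if $x \in D_\alpha$. *)

(* Defs.v *)
From Stdlib Require Import Reals Lra ClassicalDescription.
Open Scope R_scope.

Definition floorR (x : R) : R := IZR (Int_part x).

Definition D (alpha x : R) : Prop :=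
  exists n : nat, (1 <= n)%nat /\ 1 / (INR n + alpha) <= x /\ x <= 1 / INR n.

Definition I (alpha x : R) : Prop := Rmin alpha (1 - alpha) <= x /\ x <= 1.

(* T_alpha, defined (classically) on all reals; only its values on I_alpha matter. *)
Definition T (alpha x : R) : R :=
  if excluded_middle_informative (D alpha x)
  then 1 + floorR (1 / x) - 1 / x
  else 1 / x - floorR (1 / x).

(* Main.v *)
Require Import Defs.
From Stdlib Require Import Reals Lra Lia ClassicalDescription.
Open Scope R_scope.

Lemma inv_le_l (p x : R) : 0 < p -> 1 / p <= x -> 1 <= x * p.
Proof. intros Hp H. apply Rmult_le_compat_r with (r := p) in H; [|lra].
  replace (1 / p * p) with 1 in H by (field; lra). lra. Qed.

Lemma inv_le_r (p x : R) : 0 < p -> x <= 1 / p -> x * p <= 1.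
Proof. intros Hp H. apply Rmult_le_compat_r with (r := p) in H; [|lra].
  replace (1 / p * p) with 1 in H by (field; lra). lra. Qed.

Lemma inv_le_l' (p x : R) : 0 < p -> 1 <= x * p -> 1 / p <= x.
Proof. intros Hp H. apply Rmult_le_reg_r with p; [lra|].
  replace (1 / p * p) with 1 by (field; lra). lra. Qed.

Lemma inv_le_r' (p x : R) : 0 < p -> x * p <= 1 -> x <= 1 / p.
Proof. intros Hp H. apply Rmult_le_reg_r with p; [lra|].
  replace (1 / p * p) with 1 by (field; lra). lra. Qed.

Lemma floor_m1 (z : R) : floorR (z - 1) = floorR z - 1.
Proof.
  unfold floorR, Int_part.
  assert (up (z - 1) = (up z - 1)%Z).
  { destruct (archimed z) as [A B]. apply eq_sym, tech_up; rewrite minus_IZR; lra. }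
  rewrite H, !minus_IZR. ring.
Qed.

Theorem proposition3p1 (alpha : R) (h0 : 0 < alpha) (h1 : alpha < 1 / 2) :
  T alpha alpha = T alpha (T alpha (1 - alpha)).
Proof.
  set (a := alpha) in *.
  assert (ND : ~ D a (1 - a)).
  { intros [n [Hn [L U]]].
    assert (Hn' : 1 <= INR n) by (apply (le_INR 1); lia).
    apply inv_le_l in L; [|lra]. apply inv_le_r in U; [|lra].
    destruct (Nat.eq_dec n 1) as [->|Hne].
    - simpl in L. nra.
    - assert (2 <= INR n) by (apply (le_INR 2); lia). nra. }
  assert (E1 : T a (1 - a) = a / (1 - a)).
  { unfold T. destruct (excluded_middle_informative _) as [d|_]; [contradiction|].
    assert (F : floorR (1 / (1 - a)) = 1).
    { unfold floorR, Int_part.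
      assert (up (1 / (1 - a)) = 2%Z).
      { apply eq_sym, tech_up.
        - apply Rmult_lt_reg_r with (1 - a); [lra|].
          replace (1 / (1 - a) * (1 - a)) with 1 by (field; lra). simpl. lra.
        - assert (1 <= 1 / (1 - a)).
          { apply inv_le_r'; lra. } simpl. lra. }
      rewrite H. simpl. ring. }
    rewrite F. field. lra. }
  rewrite E1. set (y := a / (1 - a)).
  assert (Hy : 1 / y = 1 / a - 1) by (unfold y; field; lra).
  assert (Hypos : 0 < y) by (unfold y; apply Rdiv_lt_0_compat; lra).
  assert (DI : D a a <-> D a y).
  { split.
    - intros [n [Hn [L U]]].
      assert (Hn' : 1 <= INR n) by (apply (le_INR 1); lia).
      apply inv_le_l in L; [|lra]. apply inv_le_r in U; [|lra].
      destruct n as [|m]; [lia|].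
      destruct (Nat.eq_dec m 0) as [->|Hm].
      + simpl in L. nra.
      + exists m. rewrite S_INR in L, U.
        assert (1 <= INR m) by (apply (le_INR 1); lia).
        split; [lia|]. unfold y. split.
        * apply inv_le_l'; [lra|].
          apply Rmult_le_reg_r with (1 - a); [lra|].
          replace (a / (1 - a) * (INR m + a) * (1 - a)) with (a * (INR m + a)) by (field; lra).
          nra.
        * apply inv_le_r'; [lra|].
          replace (a / (1 - a) * INR m) with (a * INR m / (1 - a)) by (field; lra).
          apply Rmult_le_reg_r with (1 - a); [lra|].
          replace (a * INR m / (1 - a) * (1 - a)) with (a * INR m) by (field; lra).
          nra.
    - intros [n [Hn [L U]]].
      assert (Hn' : 1 <= INR n) by (apply (le_INR 1); lia).
      apply inv_le_l in L; [|lra]. apply inv_le_r in U; [|lra].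
      unfold y in L, U.
      exists (S n). rewrite S_INR. split; [lia|]. split.
      + apply inv_le_l'; [lra|].
        assert (1 - a <= a * (INR n + a)).
        { apply Rmult_le_compat_r with (r := 1 - a) in L; [|lra].
          replace (a / (1 - a) * (INR n + a) * (1 - a)) with (a * (INR n + a)) in L by (field; lra).
          lra. }
        nra.
      + apply inv_le_r'; [lra|].
        assert (a * INR n <= 1 - a).
        { apply Rmult_le_compat_r with (r := 1 - a) in U; [|lra].
          replace (a / (1 - a) * INR n * (1 - a)) with (a * INR n) in U by (field; lra).
          lra. }
        nra. }
  unfold T. rewrite Hy, floor_m1.
  destruct (excluded_middle_informative (D a a)) as [d1|d1];
  destruct (excluded_middle_informative (D a y)) as [d2|d2]; try tauto; ring.
Qed.
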